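(* Consider the planted $k$-factor model with $p=\lambda/n$ and suppose $\lambda k\le 1+\epsilon$ for some $\epsilon\in(0,1)$. Let $$\beta=\max\Big\{4\log(1+\epsilon),\ \sqrt{\tfrac{8\log n}{n}}\Big\}$$ and let $\widehat H$ be any estimator that outputs a $k$-factor contained in $G$. Then, conditioned on any realization of $H^*$, $$\mathbb P\{\ell(\widehat H,H^* )\ge 2\beta\mid H^*\}\le e^{1/2}\beta\qquad\text{and}\qquad \mathbb E[\ell(\widehat H,H^* )\mid H^*]\le 6\beta.$$
   Context: Planted $k$-factor model: fix an integer $k\ge1$ and $n$ with $kn$ even. A $k$-factor on $[n]$ is a $k$-regular simple graph with vertex set $[n]$, identified with its edge set; $\mathcal H$ is the set of all $k$-factors on $[n]$. Let $p=\lambda/n\in[0,1]$. Draw $H^*$ uniformly at random from $\mathcal H$ and, independently, $G_0\sim\mathcal G(n,p)$ (each of the $\binom n2$ vertex pairs is an edge independently with probability $p$). The observed graph is $G=G_0\cup H^*$. An estimator is a function $\widehat H=\widehat H(G)$ taking values in sets of edges of the complete graph on $[n]$. The reconstruction error is $\ell(H^*,\widehat H)=\ell(\widehat H,H^* )=|H^*\triangle\widehat H|/|H^*|$, where $|H^*|=kn/2$. *)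

(* Defs.v *)
From HB Require Import structures.
From mathcomp Require Import all_boot all_order all_algebra.
From mathcomp Require Import reals sequences exp.
Set Implicit Arguments. Unset Strict Implicit. Unset Printing Implicit Defensive.
Import Order.TTheory GRing.Theory Num.Theory.
Local Open Scope ring_scope.

(* Vertex set [n] = 'I_n.  An edge of the complete graph K_n is a 2-element
   subset of 'I_n; a (simple) graph on [n] is identified with its edge set. *)
Definition edges (n : nat) : {set {set 'I_n}} := [set e : {set 'I_n} | #|e| == 2%N].

Definition is_graph (n : nat) (G : {set {set 'I_n}}) : bool := G \subset edges n.

Definition degree (n : nat) (G : {set {set 'I_n}}) (v : 'I_n) : nat :=
  #|[set e in G | v \in e]|.

Definition kfactor (n k : nat) (H : {set {set 'I_n}}) : bool :=
  is_graph H && [forall v : 'I_n, degree H v == k].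

Definition symdiff (T : finType) (A B : {set T}) : {set T} := (A :\: B) :|: (B :\: A).

Definition loss (R : realType) (n : nat) (H Hh : {set {set 'I_n}}) : R :=
  (#|symdiff H Hh|)%:R / (#|H|)%:R.

Definition gnp_weight (R : realType) (n : nat) (p : R) (G0 : {set {set 'I_n}}) : R :=
  p ^+ #|G0| * (1 - p) ^+ (#|edges n| - #|G0|).

(* Conditional on Hstar = H, the only randomness is G0 ~ G(n,p) (independent of Hstar),
   and the observed graph is G = G0 :|: H. *)
Definition cond_prob (R : realType) (n : nat) (p : R) (H : {set {set 'I_n}})
    (E : {set {set 'I_n}} -> bool) : R :=
  \sum_(G0 in powerset (edges n)) gnp_weight p G0 * (E (G0 :|: H))%:R.

Definition cond_expect (R : realType) (n : nat) (p : R) (H : {set {set 'I_n}})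
    (X : {set {set 'I_n}} -> R) : R :=
  \sum_(G0 in powerset (edges n)) gnp_weight p G0 * X (G0 :|: H).

(* Main.v *)
Require Import Defs.
From HB Require Import structures.
From mathcomp Require Import all_boot all_order all_algebra.
From mathcomp Require Import reals sequences exp.
From mathcomp Require Import zify ring lra.
Import Order.TTheory GRing.Theory Num.Theory.
Set Implicit Arguments. Unset Strict Implicit. Unset Printing Implicit Defensive.

Lemma degreeE n (G : {set {set 'I_n}}) v :
  degree G v = \sum_(e in G) (v \in e : nat).
Proof.
rewrite /degree -sum1_card big_mkcond [RHS]big_mkcond /=.
by apply: eq_bigr => e _; rewrite inE; case: (e \in G); case: (v \in e).
Qed.

Lemma graph_card2 n (G : {set {set 'I_n}}) e : is_graph G -> e \in G -> #|e| = 2.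
Proof. by move=> /subsetP H /H; rewrite inE => /eqP. Qed.

Lemma handshake n (G : {set {set 'I_n}}) :
  is_graph G -> \sum_v degree G v = (2 * #|G|)%N.
Proof.
move=> gG.
rewrite (eq_bigr _ (fun v _ => degreeE G v)) exchange_big /=.
rewrite -sum1_card big_distrr /=; apply: eq_bigr => e eG.
by rewrite muln1 -(graph_card2 gG eG) -sum1_card [RHS]big_mkcond.
Qed.

Definition dfact m := \prod_(i < m) (2 * i + 1).

Definition Sdeg n (d : 'I_n -> nat) : {set {set {set 'I_n}}} :=
  [set A : {set {set 'I_n}} | is_graph A & [forall v, degree A v == d v]].

Lemma degree_nbr n (A : {set {set 'I_n}}) v : is_graph A ->
  degree A v = #|[set w | (w != v) && ([set v; w] \in A)]|.
Proof.
move=> gA; rewrite /degree.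
have inj : {in [set w | (w != v) && ([set v; w] \in A)] &, injective (fun w => [set v; w])}.
  move=> w1 w2; rewrite !inE => /andP[h1 _] /andP[h2 _] /setP E.
  have := E w1; rewrite !inE eqxx orbT (negbTE h1) /=.
  by move=> /esym /eqP.
rewrite -(card_in_imset inj); apply: eq_card => e; rewrite !inE.
apply/andP/imsetP.
  case=> eA ve; have := graph_card2 gA eA => /eqP /cards2P [x [y [xy exy]]].
  move: ve; rewrite exy in_set2 => /orP[] /eqP vx; subst v.
    by exists y; rewrite // inE eq_sym xy -exy eA.
  exists x; last by rewrite setUC.
  by rewrite inE xy /= setUC -exy.
by case=> w; rewrite inE => /andP[_ h] ->; rewrite h set21.
Qed.

Lemma Sdeg0 n (d : 'I_n -> nat) : (forall v, d v = 0) -> #|Sdeg d| <= 1.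
Proof.
move=> d0; apply: (@leq_trans #|[set (set0 : {set {set 'I_n}})]|); last by rewrite cards1.
apply: subset_leq_card; apply/subsetP => A; rewrite !inE => /andP[gA /forallP dA].
apply/eqP/setP => e; rewrite inE; apply/negbTE/negP => eA.
have /card_gt0P [v ve] : 0 < #|e| by rewrite (graph_card2 gA eA).
have := dA v; rewrite d0 /degree cards_eq0 => /eqP/setP/(_ e).
by rewrite !inE eA ve.
Qed.

Lemma degree_rem n (A : {set {set 'I_n}}) f u : f \in A ->
  degree (A :\ f) u = degree A u - (u \in f).
Proof.
move=> fA; rewrite /degree.
have -> : [set e in A :\ f | u \in e] = [set e in A | u \in e] :\ f.
  by apply/setP => e; rewrite !inE andbA.
by rewrite [#|[set e in A | u \in e]|](cardsD1 f) inE fA /= addKn.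
Qed.

Lemma prod_split2 (I : finType) (F : I -> nat) v w : v != w ->
  \prod_u F u = F v * F w * \prod_(u | (u != v) && (u != w)) F u.
Proof.
move=> vw; rewrite (bigD1 v) //= (bigD1 w) /=; last by rewrite eq_sym.
by rewrite mulnA.
Qed.

Lemma sum_split2 (I : finType) (F : I -> nat) v w : v != w ->
  \sum_u F u = F v + F w + \sum_(u | (u != v) && (u != w)) F u.
Proof.
move=> vw; rewrite (bigD1 v) //= (bigD1 w) /=; last by rewrite eq_sym.
by rewrite addnA.
Qed.

Lemma card_sum (I : finType) (P : pred I) : #|[set x | P x]| = \sum_x P x.
Proof.
rewrite -sum1_card big_mkcond /=; apply: eq_bigr => x _.
by rewrite inE; case: (P x).
Qed.

Lemma card_sum_in (I : finType) (S : {set I}) (P : pred I) :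
  #|[set x in S | P x]| = \sum_(x in S) P x.
Proof.
rewrite -sum1_card big_mkcond [RHS]big_mkcond /=; apply: eq_bigr => x _.
by rewrite inE; case: (x \in S); case: (P x).
Qed.

Lemma factP x : 0 < x -> x`! = x * (x - 1)`!.
Proof. by case: x => // x _; rewrite factS subn1. Qed.

Lemma Sdeg_bound n m : forall d : 'I_n -> nat, \sum_v d v = (2 * m)%N ->
  #|Sdeg d| * \prod_v (d v)`! <= dfact m.
Proof.
elim: m => [|m IH] d sd.
  have d0 : forall v, d v = 0.
    move=> v; apply/eqP; rewrite -leqn0.
    have : d v <= \sum_u d u by rewrite (bigD1 v) //= leq_addr.
    by rewrite sd muln0.
  rewrite /dfact big_ord0 big1 ?muln1 ?Sdeg0 // => v _.
  by rewrite d0.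
case: (pickP (fun v => 0 < d v)) => [v dv|h]; last first.
  move: sd; rewrite big1 // => v _; have := h v; rewrite /= lt0n.
  by move/negbT; rewrite negbK => /eqP.
set S := Sdeg d.
pose d' w := fun u => d u - (u == v) - (u == w).
have stepA : d v * #|S| = \sum_w #|[set A in S | (w != v) && ([set v; w] \in A)]|.
  rewrite mulnC -sum_nat_const.
  have -> : \sum_(A in S) d v = \sum_(A in S) \sum_w ((w != v) && ([set v; w] \in A)).
    apply: eq_bigr => A; rewrite inE => /andP[gA /forallP dA].
    by rewrite -(eqP (dA v)) degree_nbr // card_sum.
  rewrite exchange_big /=; apply: eq_bigr => w _.
  by rewrite card_sum_in.
have stepB : forall w, #|[set A in S | (w != v) && ([set v; w] \in A)]| * \prod_u (d u)`!
    <= d v * ((w != v) * d w * dfact m).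
  move=> w; case: (eqVneq w v) => [->|wv].
    rewrite (_ : [set A in S | _] = set0) ?cards0 ?mul0n //.
    by apply/setP => A; rewrite !inE /= andbF.
  case: (posnP (d w)) => [dw0|dw].
    rewrite (_ : [set A in S | _] = set0) ?cards0 ?mul0n //; apply/setP => A; rewrite !inE.
    apply/negbTE/negP => /andP[/andP[gA /forallP dA] /andP[_ fA]].
    have := dA w; rewrite dw0 /degree cards_eq0 => /eqP/setP/(_ [set v; w]).
    by rewrite !inE fA eqxx orbT.
  have vw : v != w by rewrite eq_sym.
  set f := [set v; w].
  have inj : {in [set A in S | (w != v) && (f \in A)] &, injective (fun A => A :\ f)}.
    move=> A1 A2; rewrite !inE => /andP[_ /andP[_ h1]] /andP[_ /andP[_ h2]] E.
    by rewrite -(setD1K h1) -(setD1K h2) E.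
  have sub : [set A :\ f | A in [set A in S | (w != v) && (f \in A)]] \subset Sdeg (d' w).
    apply/subsetP => B /imsetP [A]; rewrite !inE => /andP[/andP[gA /forallP dA] /andP[_ fA]] ->.
    apply/andP; split.
      by apply: subset_trans gA; apply: subsetDl.
    apply/forallP => u; rewrite degree_rem // (eqP (dA u)) /d' in_set2.
    case: (eqVneq u v) => [->|uv]; first by rewrite (negbTE vw) subn0.
    by rewrite subn0.
  have := subset_leq_card sub; rewrite (card_in_imset inj) => cardle.
  have sd' : \sum_u d' w u = (2 * m)%N.
    move: sd; rewrite (sum_split2 _ vw) (sum_split2 (d' w) vw).
    rewrite /d' !eqxx (negbTE vw) eq_sym (negbTE vw) !subn0.
    have -> : \sum_(u | (u != v) && (u != w)) (d u - (u == v) - (u == w)) =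
              \sum_(u | (u != v) && (u != w)) d u.
      by apply: eq_bigr => u /andP[/negbTE -> /negbTE ->]; rewrite !subn0.
    move: dv dw; rewrite /=. 
    move=> dv dw E; rewrite mulnS in E. set s := \sum_(_ | _) _ in E *. clearbody s. have L : forall a b c mm, 0 < a -> 0 < b -> a + b + c = 2 + 2 * mm -> a - 1 + (b - 1) + c = 2 * mm by move=> *; lia. exact: L.
  have prodE : \prod_u (d u)`! = d v * d w * \prod_u (d' w u)`!.
    rewrite (prod_split2 _ vw) (prod_split2 (fun u => (d' w u)`!) vw).
    rewrite /d' !eqxx (negbTE vw) eq_sym (negbTE vw) !subn0.
    have -> : \prod_(u | (u != v) && (u != w)) (d u - (u == v) - (u == w))`! =
              \prod_(u | (u != v) && (u != w)) (d u)`!.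
      by apply: eq_bigr => u /andP[/negbTE -> /negbTE ->]; rewrite !subn0.
    rewrite (factP dv) (factP dw) /=; ring.
  rewrite prodE /=; rewrite wv /= in cardle.
  have := IH _ sd' => ih.
  have h1 := leq_mul cardle (leqnn (\prod_u (d' w u)`!)).
  set a := #|_| in h1 *; set b := #|_| in h1 ih; set P := \prod_u _ in h1 ih *.
  rewrite (_ : a * (d v * d w * P) = d v * d w * (a * P)); last by ring.
  rewrite (_ : d v * (1 * d w * dfact m) = d v * d w * dfact m); last by ring.
  exact: leq_mul (leqnn _) (leq_trans h1 ih).
have sumw : \sum_w (w != v) * d w <= (2 * m + 1)%N.
  have : \sum_w d w = d v + \sum_w (w != v) * d w.
    rewrite (bigD1 v) //= [X in _ = _ + X](bigD1 v) //= eqxx mul0n add0n.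
    congr (_ + _); apply: eq_bigr => w /negbTE wv; by rewrite wv mul1n.
  rewrite sd; lia.
have df : dfact m.+1 = (dfact m * (2 * m + 1))%N by rewrite /dfact big_ord_recr.
rewrite df -(leq_pmul2l dv) mulnA stepA big_distrl /=.
apply: (@leq_trans (\sum_w d v * ((w != v) * d w * dfact m))).
  by apply: leq_sum => w _; exact: stepB.
rewrite -big_distrr /= leq_pmul2l // (eq_bigr (fun w => dfact m * ((w != v) * d w))%N); last first.
  by move=> w _; rewrite mulnC mulnA.
by rewrite -big_distrr /= leq_mul2l sumw orbT.
Qed.

Lemma kfactor_graph n k (H : {set {set 'I_n}}) : kfactor k H -> is_graph H.
Proof. by case/andP. Qed.

Lemma kfactor_deg n k (H : {set {set 'I_n}}) v : kfactor k H -> degree H v = k.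
Proof. by case/andP=> _ /forallP /(_ v) /eqP. Qed.

Lemma kfactor_card n k (H : {set {set 'I_n}}) : kfactor k H -> (2 * #|H|)%N = (k * n)%N.
Proof.
move=> kH; rewrite -handshake ?(kfactor_graph kH) //.
rewrite (eq_bigr (fun=> k)); last by move=> v _; rewrite (kfactor_deg _ kH).
by rewrite sum_nat_const card_ord mulnC.
Qed.

Lemma degree_split n (G K : {set {set 'I_n}}) v :
  degree G v = degree (G :&: K) v + degree (G :\: K) v.
Proof.
rewrite /degree -(cardsID K [set e in G | v \in e]); congr (_ + _); apply: eq_card => e;
  by rewrite !inE; case: (e \in G); case: (e \in K); case: (v \in e).
Qed.

Lemma cardD_sym n (F H : {set {set 'I_n}}) : #|F| = #|H| -> #|H :\: F| = #|F :\: H|.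
Proof.
move=> E; have := cardsID H F; have := cardsID F H; rewrite setIC; lia.
Qed.

Lemma Nm_bound n k (H : {set {set 'I_n}}) m : kfactor k H ->
  #|[set F : {set {set 'I_n}} | kfactor k F & #|F :\: H| == m]| <= 'C(#|H|, m) * dfact m.
Proof.
move=> kH; set X := [set F | _].
set Dr := [set D : {set {set 'I_n}} | D \subset H & #|D| == m].
have inDr : forall F, F \in X -> H :\: F \in Dr.
  move=> F; rewrite !inE => /andP[kF /eqP <-]; rewrite subsetDl /=.
  rewrite cardD_sym //; apply/eqP; rewrite -(eqn_pmul2l (isT : 0 < 2)).
  by rewrite (kfactor_card kF) (kfactor_card kH).
rewrite -sum1_card (partition_big (fun F => H :\: F) (mem Dr)) //=.
rewrite -(cards_draws H m) -/Dr -sum_nat_const; apply: leq_sum => D DDr.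
rewrite sum1dep_card.
set Y := [set _ | _]. 
have inj : {in Y &, injective (fun F => F :\: H)}.
  move=> F1 F2; rewrite !inE => /andP[_ /eqP e1] /andP[_ /eqP e2] E.
  have e12 : H :\: F1 = H :\: F2 by rewrite e1 e2.
  apply/setP => e; move/setP/(_ e): E; move/setP/(_ e): e12; rewrite !inE.
  by case: (e \in H); case: (e \in F1); case: (e \in F2).
have sub : [set F :\: H | F in Y] \subset Sdeg (fun v => degree D v).
  apply/subsetP => A /imsetP [F]; rewrite !inE => /andP[/andP[kF _] /eqP eD] ->.
  apply/andP; split.
    by apply: subset_trans (kfactor_graph kF); apply: subsetDl.
  apply/forallP => v; apply/eqP.
  have := degree_split F H v; have := degree_split H F v.
  rewrite (kfactor_deg _ kF) (kfactor_deg _ kH) setIC eD; lia.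
have := subset_leq_card sub; rewrite (card_in_imset inj) => le1.
apply: (leq_trans le1).
have gD : is_graph D.
  by move: DDr; rewrite inE => /andP[sD _]; apply: subset_trans sD (kfactor_graph kH).
have sD : \sum_v degree D v = (2 * m)%N.
  by rewrite handshake //; move: DDr; rewrite inE => /andP[_ /eqP ->].
have := Sdeg_bound sD.
have : 0 < \prod_v (degree D v)`! by rewrite prodn_gt0 // => v; rewrite fact_gt0.
move=> h1 h2; apply: leq_trans h2; apply: leq_pmulr h1.
Qed.

Local Open Scope ring_scope.

Lemma binom_sets (R : comNzRingType) (T : finType) (X : {set T}) (p q : R) :
  \sum_(B in powerset X) p ^+ #|B| * q ^+ (#|X| - #|B|) = (q + p) ^+ #|X|.
Proof.
rewrite exprDn (partition_big (fun B : {set T} => (inord #|B| : 'I_(#|X|.+1))) xpredT) //=.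
apply: eq_bigr => i _.
have E : forall B, (B \in powerset X) && (inord #|B| == i :> 'I_(#|X|.+1)) =
    (B \in [set C : {set T} | C \subset X & #|C| == i]).
  move=> B; rewrite powersetE inE; case sB: (B \subset X) => //=.
  have cB : (#|B| < #|X|.+1)%N by rewrite ltnS subset_leq_card.
  by rewrite -val_eqE /= inordK.
rewrite (eq_bigl _ _ E).
rewrite (eq_bigr (fun=> p ^+ i * q ^+ (#|X| - i))); last first.
  by move=> B; rewrite inE => /andP[_ /eqP ->].
rewrite sumr_const cards_draws; ring.
Qed.

Lemma weight_sub (R : comNzRingType) (T : finType) (E S : {set T}) (p : R) : S \subset E ->
  \sum_(G0 in powerset E) p ^+ #|G0| * (1 - p) ^+ (#|E| - #|G0|) * (S \subset G0)%:R
  = p ^+ #|S|.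
Proof.
move=> sSE.
have -> : \sum_(G0 in powerset E) p ^+ #|G0| * (1 - p) ^+ (#|E| - #|G0|) * (S \subset G0)%:R
   = \sum_(G0 in powerset E | S \subset G0) p ^+ #|G0| * (1 - p) ^+ (#|E| - #|G0|).
  rewrite [RHS]big_mkcondr /=; apply: eq_bigr => G0 _.
  by case: (S \subset G0); rewrite ?mulr1 ?mulr0.
have inj : {in powerset (E :\: S) &, injective (fun B => S :|: B)}.
  move=> B1 B2; rewrite !powersetE => h1 h2 e.
  apply/setP => x; move/setP/(_ x): e; move/subsetP/(_ x): h1; move/subsetP/(_ x): h2.
  rewrite !inE; case: (x \in S); case: (x \in B1); case: (x \in B2); case: (x \in E) => //=;
  by [move=> /(_ isT) | move=> _ /(_ isT)].
rewrite (eq_bigl (fun G0 => G0 \in [set S :|: B | B in powerset (E :\: S)])); last first.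
  move=> G0; apply/andP/imsetP.
    rewrite powersetE => -[sG sS]; exists (G0 :\: S).
      by rewrite powersetE setSD.
    apply/setP => x; move/subsetP/(_ x): sS; rewrite !inE.
    by case: (x \in S); case: (x \in G0) => // ->.
  case=> B; rewrite powersetE => sB ->; split.
    by rewrite powersetE subUset sSE /=; apply: subset_trans sB (subsetDl _ _).
  exact: subsetUl.
rewrite big_imset //=.
have cS : forall B, B \in powerset (E :\: S) -> #|S :|: B| = (#|S| + #|B|)%N.
  move=> B; rewrite powersetE => sB; rewrite cardsU.
  rewrite (_ : S :&: B = set0) ?cards0 ?subn0 //.
  apply/setP => x; move/subsetP/(_ x): sB; rewrite !inE.
  by case: (x \in S); case: (x \in B) => //= /(_ isT).
have cE : #|E :\: S| = (#|E| - #|S|)%N.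
  by rewrite cardsD (setIidPr sSE).
transitivity (\sum_(B in powerset (E :\: S)) p ^+ #|S| * (p ^+ #|B| * (1 - p) ^+ (#|E :\: S| - #|B|))).
  apply: eq_bigr => B hB; rewrite cS // exprD cE subnDA; ring.
rewrite -big_distrr /= binom_sets subrK expr1n mulr1 //.
Qed.

Lemma geom_tail (R : realType) (c a : R) (L : nat) : 0 < c -> a <= L%:R ->
  \sum_(m < L | a <= m%:R) (expR (- (m%:R * c)) - expR (- (m.+1%:R * c)))
  <= expR (- (a * c)) - expR (- (L%:R * c)).
Proof.
move=> c0; elim: L => [|L IH] aL.
  rewrite big_ord0 subr_ge0 ler_expR; nra.
rewrite big_mkcond big_ord_recr /= -big_mkcond /=.
case: (lerP a L%:R) => aL'.
  have := IH aL'; lra.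
rewrite big1; last first.
  move=> m am; exfalso; have : (m < L)%N by [].
  rewrite -(ltr_nat R) => mL; lra.
rewrite add0r subr_ge0 ler_expR; nra.
Qed.

Lemma geom_sum (R : realType) (c a : R) (L : nat) : 0 < c -> a <= L%:R ->
  \sum_(m < L | a <= m%:R) expR (- (m%:R * c)) <= expR (- (a * c)) / (1 - expR (- c)).
Proof.
move=> c0 aL.
have d0 : 0 < 1 - expR (- c) by rewrite subr_gt0 expR_lt1; lra.
rewrite ler_pdivlMr //.
rewrite big_distrl /=.
have := geom_tail c0 aL.
have E : forall m : 'I_L, expR (- (m%:R * c)) * (1 - expR (- c)) =
   expR (- (m%:R * c)) - expR (- (m.+1%:R * c)).
  move=> m; rewrite mulrBr mulr1 -expRD; congr (_ - expR _).
  rewrite -natr1; ring.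
rewrite (eq_bigr _ (fun m _ => E m)).
have := expR_ge0 (- (L%:R * c)); lra.
Qed.

Lemma dfact_le j : (dfact j <= 2 ^ j * j`!)%N.
Proof.
elim: j => [|j IH]; first by rewrite /dfact big_ord0.
rewrite /dfact big_ord_recr /= -/(dfact j) factS expnS.
have -> : (2 * 2 ^ j * (j.+1 * j`!) = (2 ^ j * j`!) * (2 * j.+1))%N by ring.
by apply: leq_mul => //; lia.
Qed.

Lemma ffact_bound (R : realType) (N j : nat) (p e : R) : (0 < N)%N -> (j <= N)%N ->
  0 <= p -> N%:R * 2 * p <= 1 + e -> 0 <= e ->
  (N ^_ j * 2 ^ j)%N%:R * p ^+ j <=
  expR (j%:R * ln (1 + e) - j%:R * (j%:R - 1) / (2 * N%:R)).
Proof.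
move=> N0; elim: j => [|j IH] jN p0 pe e0.
  by rewrite ffactn0 expn0 expr0 !mul0r subr0 expR0 mulr1.
have jN' : (j <= N)%N by lia.
have := IH jN' p0 pe e0 => ih.
have N0' : 0 < N%:R :> R by rewrite ltr0n.
have -> : (N ^_ j.+1 * 2 ^ j.+1)%N%:R * p ^+ j.+1 =
   ((N ^_ j * 2 ^ j)%N%:R * p ^+ j) * ((N%:R - j%:R) * 2 * p) :> R.
  rewrite ffactnSr expnS !natrM natrB // natrX exprS; ring.
have L0 : 0 < 1 + e by lra.
have f1 : (N%:R - j%:R) * 2 * p <= expR (ln (1 + e) - j%:R / N%:R).
  rewrite expRD lnK ?posrE //.
  have h1 : (1 - j%:R / N%:R : R) <= expR (- (j%:R / N%:R)).
    exact: expR_ge1Dx.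
  have h2 : 0 <= (1 - j%:R / N%:R : R).
    rewrite subr_ge0 ler_pdivrMr // mul1r ler_nat; lia.
  have -> : (N%:R - j%:R) * 2 * p = (1 - j%:R / N%:R) * (N%:R * 2 * p).
    by field; rewrite gt_eqF.
  rewrite mulrC; apply: ler_pM; [ | exact: h2 | exact: pe | exact: h1].
  by rewrite !mulr_ge0 ?ler0n.
have g0 : 0 <= (N%:R - j%:R) * 2 * p.
  have : j%:R < N%:R :> R by rewrite ltr_nat.
  nra.
apply: (le_trans (ler_pM _ g0 ih f1)).
  by rewrite mulr_ge0 ?exprn_ge0 ?ler0n.
rewrite -expRD ler_expR.
rewrite le_eqVlt; apply/orP; left; apply/eqP.
rewrite -natr1; field; rewrite ?mulf_neq0 ?gt_eqF //; lra.
Qed.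

Lemma term_final (R : realType) (N j : nat) (p e b : R) : (0 < N)%N -> (j <= N)%N ->
  0 <= p -> N%:R * 2 * p <= 1 + e -> 0 < e -> 0 < b -> 4 * ln (1 + e) <= b ->
  b * N%:R <= j%:R ->
  ('C(N, j) * dfact j)%N%:R * p ^+ j <= expR (b / 2) * expR (- (j%:R * (b / 4))).
Proof.
move=> N0 jN p0 pe e0 b0 Lb bj.
have nat1 : ('C(N, j) * dfact j <= N ^_ j * 2 ^ j)%N.
  rewrite -bin_ffact mulnC [X in (_ <= X)%N]mulnC mulnA.
  by rewrite (mulnC (2 ^ j)%N) -mulnA mulnC leq_mul // dfact_le.
apply: (@le_trans _ _ ((N ^_ j * 2 ^ j)%N%:R * p ^+ j)).
  by apply: ler_wpM2r; rewrite ?exprn_ge0 ?ler_nat.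
apply: (le_trans (ffact_bound N0 jN p0 pe (ltW e0))).
rewrite -expRD ler_expR.
have L0 : 0 <= ln (1 + e) by apply: ln_ge0; lra.
have N0' : 0 < N%:R :> R by rewrite ltr0n.
have j1 : 1 <= j%:R :> R.
  have : 0 < j%:R :> R by nra.
  by rewrite ltr0n ler1n.
set x := j%:R in bj j1 *; set L := ln (1 + e) in L0 Lb *; set M := N%:R in N0' bj *.
have h : x * (x - 1) / (2 * M) >= (x - 1) * b / 2.
  rewrite ler_pdivlMr; last lra.
  have -> : (x - 1) * b / 2 * (2 * M) = (x - 1) * (b * M) by field.
  by rewrite [X in _ <= X]mulrC; apply: ler_wpM2l; lra.
nra.
Qed.

Lemma expR_le_inv (R : realType) (x : R) : 0 <= x < 1 -> expR x <= (1 - x)^-1.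
Proof.
move=> /andP[x0 x1].
have h := expR_ge1Dx (- x).
rewrite expRN in h.
rewrite -(invrK (expR x)) lef_pV2 ?posrE ?invr_gt0 ?expR_gt0 ?subr_gt0 //.
Qed.

Lemma expR_half_le2 (R : realType) : expR (1 / 2) <= 2 :> R.
Proof.
apply: (le_trans (expR_le_inv _)); first by apply/andP; split; lra.
have -> : (1 - 1 / 2 : R) = 2^-1 by field.
by rewrite invrK.
Qed.

Lemma ln2_ge (R : realType) : 5 / 8 <= ln (2 : R).
Proof.
have h : expR (5 / 8) <= 2 :> R.
  have -> : (5 / 8 : R) = 4%:R * (5 / 32) by field.
  rewrite expRM_natl.
  have h1 : expR (5 / 32) <= 32 / 27 :> R.
    apply: (le_trans (expR_le_inv _)); first by apply/andP; split; lra.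
    have -> : (1 - 5 / 32 : R) = 27 / 32 by field.
    by rewrite invf_div.
  have h2 : (32 / 27 : R) ^+ 4 <= 2.
    rewrite (_ : 4%N = (2*2)%N) // exprM.
    have h : (32/27:R)^+2 <= 141/100 by rewrite expr2; lra.
    have h0 : 0 <= (32/27:R)^+2 by rewrite exprn_ge0 //; lra.
    set a := (32/27:R)^+2 in h h0 *. rewrite expr2. nra.
  apply: le_trans h2.
  have e0 : 0 <= expR (5 / 32) :> R by apply: expR_ge0.
  rewrite (_ : 4%N = (2*2)%N) // !exprM.
  have h3 : expR (5 / 32) ^+ 2 <= (32 / 27) ^+ 2 :> R by rewrite !expr2; nra.
  have h4 : 0 <= expR (5 / 32) ^+ 2 :> R by rewrite exprn_ge0.
  move: h3 h4; set a := expR (5 / 32) ^+ 2; set c := (32 / 27) ^+ 2 => h3 h4.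
  rewrite !expr2; nra.
by rewrite -ler_expR lnK // posrE; lra.
Qed.

Lemma one_m_expR (R : realType) (x : R) : 0 <= x -> x / (1 + x) <= 1 - expR (- x).
Proof.
move=> x0; have h := expR_ge1Dx x.
rewrite expRN.
have ex : 0 < expR x by apply: expR_gt0.
have -> : 1 - (expR x)^-1 = (expR x - 1) / expR x by field; rewrite gt_eqF.
rewrite ler_pdivrMr; last lra.
rewrite mulrAC ler_pdivlMr //; nra.
Qed.

Lemma prob_final (R : realType) (n N : nat) (b : R) : (2 <= n)%N -> (n <= 2 * N)%N ->
  0 < b -> b <= 1 -> 8 * ln n%:R / n%:R <= b ^+ 2 ->
  expR (b / 2) * (expR (- (b * N%:R * (b / 4))) / (1 - expR (- (b / 4))))
  <= expR (1 / 2) * b.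
Proof.
move=> n2 nN b0 b1 bb.
have n0 : 0 < n%:R :> R by rewrite ltr0n; lia.
have nN' : n%:R <= 2 * N%:R :> R by rewrite -natrM ler_nat.
have lnn : 5 / 8 <= ln (n%:R : R).
  apply: (le_trans (ln2_ge R)); rewrite ler_ln ?posrE //.
  by rewrite ler_nat.
have bb' : 8 * ln n%:R <= b ^+ 2 * n%:R by rewrite -ler_pdivrMr.
have e1 : expR (- (b * N%:R * (b / 4))) <= n%:R^-1.
  rewrite -[n%:R in X in _ <= X](lnK) ?posrE // -expRN ler_expR lerN2.
  rewrite expr2 in bb'; nra.
have d0 : b / 5 <= 1 - expR (- (b / 4)).
  apply: le_trans (one_m_expR _); last lra.
  rewrite ler_pdivlMr; last lra.
  nra.
have d0' : 0 < b / 5 by lra.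
have e2 : expR (b / 2) <= expR (1 / 2) by rewrite ler_expR; lra.
have q : expR (- (b * N%:R * (b / 4))) / (1 - expR (- (b / 4))) <= n%:R^-1 / (b / 5).
  apply: ler_pM; rewrite ?expR_ge0 ?invr_ge0 //; first by apply: (le_trans (ltW d0')).
  by rewrite lef_pV2 ?posrE // (lt_le_trans d0').
have fin : n%:R^-1 / (b / 5) <= b.
  rewrite ler_pdivrMr // -div1r ler_pdivrMr //.
  rewrite expr2 in bb'; nra.
apply: ler_pM; rewrite ?expR_ge0 //.
  by rewrite mulr_ge0 ?expR_ge0 // invr_ge0; apply: (le_trans (ltW d0')).
exact: le_trans q fin.
Qed.

Lemma kfactor_eqcard n k (H F : {set {set 'I_n}}) : kfactor k H -> kfactor k F -> #|F| = #|H|.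
Proof.
move=> kH kF; have := kfactor_card kH; have := kfactor_card kF; lia.
Qed.

Lemma loss_formula (R : realType) n k (H F : {set {set 'I_n}}) :
  kfactor k H -> kfactor k F ->
  loss R H F = (2 * #|F :\: H|)%N%:R / #|H|%:R.
Proof.
move=> kH kF; rewrite /loss /symdiff cardsU.
rewrite (_ : (H :\: F) :&: (F :\: H) = set0) ?cards0 ?subn0; last first.
  by apply/setP => e; rewrite !inE; case: (e \in H); case: (e \in F).
by rewrite cardD_sym ?(kfactor_eqcard kH kF) // addnn -mul2n.
Qed.

Lemma cardD_le n k (H F : {set {set 'I_n}}) : kfactor k H -> kfactor k F ->
  (#|F :\: H| <= #|H|)%N.
Proof.
move=> kH kF; rewrite -(kfactor_eqcard kH kF); apply: subset_leq_card; exact: subsetDl.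
Qed.

Lemma loss_le2 (R : realType) n k (H F : {set {set 'I_n}}) :
  kfactor k H -> kfactor k F -> (0 < #|H|)%N -> loss R H F <= 2.
Proof.
move=> kH kF H0; rewrite (loss_formula R kH kF) ler_pdivrMr ?ltr0n //.
rewrite -natrM ler_nat; have := cardD_le kH kF; lia.
Qed.

Lemma gnp_weight_ge0 (R : realType) n (p : R) (G0 : {set {set 'I_n}}) :
  0 <= p <= 1 -> 0 <= gnp_weight p G0.
Proof.
by move=> /andP[p0 p1]; rewrite /gnp_weight mulr_ge0 // exprn_ge0 // subr_ge0.
Qed.

Lemma weight_sum (R : realType) n (p : R) :
  \sum_(G0 in powerset (edges n)) gnp_weight p G0 = 1.
Proof.
have := weight_sub p (sub0set (edges n)); rewrite cards0 expr0 => <-.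
by apply: eq_bigr => G0 _; rewrite sub0set mulr1.
Qed.

Lemma union_bound (R : realType) n k (H : {set {set 'I_n}})
  (Hhat : {set {set 'I_n}} -> {set {set 'I_n}}) (p b : R) :
  kfactor k H -> 0 <= p <= 1 ->
  (forall G : {set {set 'I_n}},
      (exists F, kfactor k F && (F \subset G)) ->
      kfactor k (Hhat G) && (Hhat G \subset G)) ->
  cond_prob p H (fun G => 2 * b <= loss R H (Hhat G)) <=
  \sum_(F | kfactor k F && (2 * b <= loss R H F)) p ^+ #|F :\: H|.
Proof.
move=> kH p01 hat.
apply: (@le_trans _ _ (\sum_(G0 in powerset (edges n)) gnp_weight p G0 *
   \sum_(F | kfactor k F && (2 * b <= loss R H F)) (F :\: H \subset G0)%:R)).
  apply: ler_sum => G0 _; apply: ler_wpM2l; first exact: gnp_weight_ge0.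
  case hb: (2 * b <= loss R H (Hhat (G0 :|: H))); last by rewrite sumr_ge0 // => F _; rewrite ler0n.
  have /andP[kF sF] : kfactor k (Hhat (G0 :|: H)) && (Hhat (G0 :|: H) \subset G0 :|: H).
    by apply: hat; exists H; rewrite kH subsetUr.
  rewrite (bigD1 (Hhat (G0 :|: H))) /=; last by rewrite kF hb.
  rewrite subDset (setUC H G0) sF /= -[X in X <= _]addr0 lerD2l sumr_ge0 // => F _.
rewrite (eq_bigr (fun G0 => \sum_(F | kfactor k F && (2 * b <= loss R H F))
     gnp_weight p G0 * (F :\: H \subset G0)%:R)); last by move=> G0 _; rewrite big_distrr.
rewrite exchange_big /= le_eqVlt; apply/orP; left; apply/eqP.
apply: eq_bigr => F /andP[kF _].
rewrite /gnp_weight; apply: weight_sub.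
by apply: subset_trans (kfactor_graph kF); apply: subsetDl.
Qed.

Lemma group_bound (R : realType) n k (H : {set {set 'I_n}}) (p b : R) :
  kfactor k H -> (0 < #|H|)%N -> 0 <= p -> 0 < b ->
  \sum_(F | kfactor k F && (2 * b <= loss R H F)) p ^+ #|F :\: H| <=
  \sum_(j < #|H|.+1 | b * #|H|%:R <= j%:R) ('C(#|H|, j) * dfact j)%N%:R * p ^+ j.
Proof.
move=> kH H0 p0 b0.
set N := #|H| in H0 *.
rewrite (partition_big (fun F => (inord #|F :\: H| : 'I_N.+1)) xpredT) //=.
rewrite [X in _ <= X]big_mkcond /=; apply: ler_sum => j _.
have E : forall F, kfactor k F && (2 * b <= loss R H F) && (inord #|F :\: H| == j) ->
    #|F :\: H| = j.
  move=> F /andP[/andP[kF _] /eqP <-]; rewrite inordK // ltnS.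
  exact: (cardD_le kH kF).
rewrite (eq_bigr (fun=> p ^+ j)); last by move=> F /E ->.
rewrite sumr_const.
set S := (X in #|X|).
have S1 : (#|S| <= #|[set F : {set {set 'I_n}} | kfactor k F & #|F :\: H| == j]|)%N.
  apply: subset_leq_card; apply/subsetP => F; rewrite !inE => h.
  have h' : kfactor k F && (2 * b <= loss R H F) && (inord #|F :\: H| == j) := h.
  have EF := E F h'; by move: h' => /andP[/andP[kF _] _]; rewrite kF EF eqxx.
case: ifP => bj.
  rewrite -[p ^+ j *+ #|S|]mulr_natl; apply: (ler_wpM2r (exprn_ge0 _ p0)).
  rewrite ler_nat; exact: leq_trans S1 (Nm_bound _ kH).
rewrite (_ : #|S| = 0%N) ?mulr0n //; apply/eqP; rewrite -leqn0 leqNgt; apply/negP.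
case/card_gt0P => F h.
have {h} h : kfactor k F && (2 * b <= loss R H F) && (inord #|F :\: H| == j) := h.
have := E F h; move: h => /andP[/andP[kF lF] _] hj.
move: lF; rewrite (loss_formula R kH kF) hj ler_pdivlMr ?ltr0n // natrM.
move/negbT: bj; rewrite -ltNge => bj; nra.
Qed.

Unset Implicit Arguments.

Theorem mainTheorem3 (R : realType) (n k : nat) (lam eps : R)
  (Hhat : {set {set 'I_n}} -> {set {set 'I_n}}) (Hstar : {set {set 'I_n}}) :
  (1 <= k)%N -> ~~ odd (k * n) -> (0 < n)%N ->
  0 <= lam / n%:R <= 1 ->
  0 < eps < 1 ->
  lam * k%:R <= 1 + eps ->
  (* Hhat outputs a k-factor contained in G (whenever G contains some k-factor,
     as every observed G = G0 ∪ Hstar does) *)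
  (forall G : {set {set 'I_n}},
      (exists F, kfactor k F && (F \subset G)) ->
      kfactor k (Hhat G) && (Hhat G \subset G)) ->
  kfactor k Hstar ->
  let p := lam / n%:R in
  let beta := Num.max (4 * ln (1 + eps)) (Num.sqrt (8 * ln (n%:R) / n%:R)) in
  cond_prob p Hstar (fun G => 2 * beta <= loss R Hstar (Hhat G)) <= expR (1 / 2) * beta
  /\ cond_expect p Hstar (fun G => loss R Hstar (Hhat G)) <= 6 * beta.
Proof.
move=> k1 _ n0 p01 /andP[e0 e1] lk hat kH p beta.
have cH := kfactor_card kH.
set N := #|Hstar| in cH.
have N0 : (0 < N)%N by move: cH; case: N => //; rewrite muln0 => /esym /eqP; rewrite muln_eq0; lia.
have n2 : (2 <= n)%N.
  have /card_gt0P [e eH] := N0.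
  rewrite -(graph_card2 (kfactor_graph kH) eH); apply: leq_trans (max_card _) _.
  by rewrite card_ord.
have nN : (n <= 2 * N)%N by rewrite cH leq_pmull.
have p0 : 0 <= p by case/andP: p01.
have n0' : 0 < n%:R :> R by rewrite ltr0n.
have pe : N%:R * 2 * p <= 1 + eps.
  have -> : N%:R * 2 * p = lam * k%:R.
    rewrite /p -natrM mulnC cH natrM; field; by rewrite gt_eqF.
  exact: lk.
have L0 : 0 < ln (1 + eps) by apply: ln_gt0; lra.
have Lb : 4 * ln (1 + eps) <= beta by rewrite le_max lexx.
have b0 : 0 < beta by apply: lt_le_trans Lb; lra.
have bb : 8 * ln n%:R / n%:R <= beta ^+ 2.
  have s0 : 0 <= 8 * ln n%:R / n%:R :> R.
    by rewrite divr_ge0 ?mulr_ge0 ?ler0n // ln_ge0 // ler1n.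
  have sb : Num.sqrt (8 * ln n%:R / n%:R) <= beta by rewrite le_max lexx orbT.
  rewrite -(sqr_sqrtr s0); apply: lerXn2r; rewrite ?nnegrE ?sqrtr_ge0 //; lra.
have Pb : cond_prob p Hstar (fun G => 2 * beta <= loss R Hstar (Hhat G)) <= expR (1 / 2) * beta.
  case: (lerP beta 1) => b1; last first.
    apply: (@le_trans _ _ 1).
      apply: (@le_trans _ _ (\sum_(G0 in powerset (edges n)) gnp_weight p G0)); last by rewrite weight_sum.
      rewrite /cond_prob; apply: ler_sum => G0 _.
      rewrite -[X in _ <= X]mulr1; apply: ler_wpM2l; first exact: gnp_weight_ge0.
      by case: (2 * beta <= loss R Hstar (Hhat (G0 :|: Hstar))); rewrite ?ler01 ?lexx.
    have := expR_ge1Dx (1 / 2 : R); nra.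
  apply: (le_trans (union_bound beta kH p01 hat)).
  apply: (le_trans (group_bound kH N0 p0 b0)).
  apply: (@le_trans _ _ (\sum_(j < N.+1 | beta * N%:R <= j%:R)
        expR (beta / 2) * expR (- (j%:R * (beta / 4))))).
    apply: ler_sum => j bj; apply: (@term_final R N j p eps beta) => //.
    by rewrite -ltnS.
  rewrite -big_distrr /=; apply: le_trans (prob_final n2 nN b0 b1 bb).
  apply: ler_wpM2l; first exact: expR_ge0.
  apply: geom_sum; first lra.
  have : N%:R <= N.+1%:R :> R by rewrite ler_nat.
  have : 0 <= N%:R :> R by rewrite ler0n.
  nra.
split => //.
apply: (@le_trans _ _ (2 * beta + 2 * cond_prob p Hstar (fun G => 2 * beta <= loss R Hstar (Hhat G)))).
  apply: (@le_trans _ _ (\sum_(G0 in powerset (edges n)) (gnp_weight p G0 * (2 * beta) +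
     2 * (gnp_weight p G0 * ((2 * beta <= loss R Hstar (Hhat (G0 :|: Hstar)))%R)%:R)))); last first.
    rewrite big_split /= -big_distrl -big_distrr /= weight_sum mul1r //.
  rewrite /cond_expect; apply: ler_sum => G0 _.
  have w0 := gnp_weight_ge0 G0 p01.
  have /andP[kF _] : kfactor k (Hhat (G0 :|: Hstar)) && (Hhat (G0 :|: Hstar) \subset G0 :|: Hstar).
    by apply: hat; exists Hstar; rewrite kH subsetUr.
  have l2 := loss_le2 R kH kF N0.
  case: (lerP (2 * beta) (loss R Hstar (Hhat (G0 :|: Hstar)))) => h /=.
    rewrite mulr1n mulr1.
    have l0 : 0 <= beta by lra.
    nra.
  rewrite mulr0n mulr0 mulr0 addr0.
  apply: ler_wpM2l => //; lra.
have := expR_half_le2 R; nra.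
Qed.
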